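(* Let $k\ge 1$, let $(A,t)$ be a $\mathcal{C}_k$-algebra and let $U\subseteq A$ be an ultrafilter of $A$. Then $$N=\bigcap_{i=0}^{k-1}\big(t^i(U)\cap \varphi(t^i(U))\big)$$ is a $c$-filter of $A$.
   Context: A De Morgan algebra is a bounded distributive lattice $\langle A,\wedge,\vee,0,1\rangle$ with a unary operation $\sim$ satisfying $\sim\sim x=x$ and $\sim(x\vee y)=\sim x\wedge\sim y$. A modal pseudocomplemented De Morgan algebra ($mpM$-algebra) is an algebra $\langle A,\wedge,\vee,\sim,{}^\ast,0,1\rangle$ such that $\langle A,\wedge,\vee,\sim,0,1\rangle$ is a De Morgan algebra, $x^\ast$ is the pseudocomplement of $x$ (i.e. $x\wedge y=0$ iff $y\le x^\ast$), and $x\vee\sim x\le x\vee x^\ast$ for all $x$. Put $\nabla x=\sim(\sim x\wedge x^\ast)$ and $\triangle x=\sim\nabla\sim x$. For an integer $k\ge1$, a $\mathcal{C}_k$-algebra is a pair $(A,t)$ where $A$ is an $mpM$-algebra and $t:A\to A$ is an automorphism of $mpM$-algebras with $t^k(x)=x$ for all $x$ (where $t^0=\mathrm{id}$, $t^n=t^{n-1}\circ t$). A $c$-filter of $A$ is a lattice filter $F$ of $A$ such that $x\in F$ implies $\triangle x\in F$ and $t(x)\in F$. An ultrafilter is a maximal proper lattice filter. For a prime filter $P$ of $A$, the Birula–Rasiowa transform is $\varphi(P)=A\setminus\{\sim x: x\in P\}$ (again a prime filter). *)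

(* Defs.v *)
(* the lattice part of an mpM-algebra is a bounded
   distributive lattice (tbDistrLatticeType); ~ and * are extra operations. *)
From mathcomp Require Import all_boot all_order.
Set Implicit Arguments. Unset Strict Implicit. Unset Printing Implicit Defensive.
Import Order.TTheory.
Local Open Scope order_scope.

Section MPM.
Context {disp : Order.disp_t} {A : tbDistrLatticeType disp}.

Definition demorgan_op (neg : A -> A) : Prop :=
  (forall x, neg (neg x) = x) /\
  (forall x y, neg (x `|` y) = neg x `&` neg y).

Definition pseudocomplement (pc : A -> A) : Prop :=
  forall x y, x `&` y = \bot <-> y <= pc x.

Definition mpM_algebra (neg pc : A -> A) : Prop :=
  [/\ demorgan_op neg, pseudocomplement pc &
      forall x, x `|` neg x <= x `|` pc x].

Definition nabla (neg pc : A -> A) (x : A) : A := neg (neg x `&` pc x).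
Definition delta (neg pc : A -> A) (x : A) : A := neg (nabla neg pc (neg x)).

Definition mpM_automorphism (neg pc t : A -> A) : Prop :=
  bijective t /\
  (forall x y, t (x `&` y) = t x `&` t y) /\
  (forall x y, t (x `|` y) = t x `|` t y) /\
  t \bot = \bot /\ t \top = \top /\
  (forall x, t (neg x) = neg (t x)) /\
  (forall x, t (pc x) = pc (t x)).

Definition Ck_algebra (k : nat) (neg pc t : A -> A) : Prop :=
  [/\ mpM_algebra neg pc, mpM_automorphism neg pc t &
      forall x, iter k t x = x].

Definition lattice_filter (F : A -> Prop) : Prop :=
  [/\ exists x, F x,
      (forall x y, F x -> x <= y -> F y) &
      (forall x y, F x -> F y -> F (x `&` y))].

Definition proper_filter (F : A -> Prop) : Prop :=
  lattice_filter F /\ exists x, ~ F x.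

Definition ultrafilter (U : A -> Prop) : Prop :=
  proper_filter U /\
  forall G : A -> Prop, proper_filter G -> (forall x, U x -> G x) ->
    forall x, G x -> U x.

Definition c_filter (neg pc t : A -> A) (F : A -> Prop) : Prop :=
  [/\ lattice_filter F,
      (forall x, F x -> F (delta neg pc x)) &
      (forall x, F x -> F (t x))].

Definition image_set (f : A -> A) (S : A -> Prop) : A -> Prop :=
  fun y => exists2 x, S x & y = f x.

Definition br_transform (neg : A -> A) (P : A -> Prop) : A -> Prop :=
  fun y => ~ (exists2 x, P x & y = neg x).

Definition N_set (k : nat) (neg t : A -> A) (U : A -> Prop) : A -> Prop :=
  fun y => forall i, (i < k)%N ->
    image_set (iter i t) U y /\ br_transform neg (image_set (iter i t) U) y.

End MPM.

(* Main.v *)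
Require Import Defs.
From mathcomp Require Import all_boot all_order.
From Stdlib Require Import Classical.
Import Order.TTheory.
Local Open Scope order_scope.

Section S.
Context {disp : Order.disp_t} {A : tbDistrLatticeType disp}.

Definition primef (P : A -> Prop) :=
  [/\ lattice_filter P, ~ P \bot & forall a b, P (a `|` b) -> P a \/ P b].

Lemma ultra_prime (U : A -> Prop) : ultrafilter U -> primef U.
Proof.
move=> [[[[x0 Ux0] Uup Umeet] [z nUz]] Umax].
have Utop : U \top by apply: Uup Ux0 (lex1 _).
have nUbot : ~ U \bot by move=> Ub; apply: nUz; apply: Uup Ub (le0x _).
split => //; first by split => //; exists x0.
have key : forall a, ~ U a -> exists2 u, U u & u `&` a <= \bot.
  move=> a nUa.
  pose G := fun y => exists2 u, U u & u `&` a <= y.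
  have Gf : lattice_filter G.
    split.
    - by exists \top; exists \top => //; apply: lex1.
    - by move=> x y [u Uu H] Hxy; exists u => //; apply: le_trans Hxy.
    - move=> x y [u Uu Hu] [v Uv Hv]; exists (u `&` v); first by apply: Umeet.
      rewrite lexI; apply/andP; split.
      + apply: le_trans Hu; rewrite lexI leIr andbT; apply: le_trans (leIl _ _) _; exact: leIl.
      + apply: le_trans Hv; rewrite lexI leIr andbT; apply: le_trans (leIl _ _) _; exact: leIr.
  case: (classic (exists x, ~ G x)) => [Hp|Hn].
    exfalso; apply: nUa; apply: (Umax G) => //.
      by move=> x Ux; exists x => //; apply: leIl.
    by exists \top => //; apply: leIr.
  case: (classic (G \bot)) => // nG; exfalso; apply: Hn; by exists \bot.
move=> a b Uab; case: (classic (U a)) => [|na]; first by left.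
case: (classic (U b)) => [|nb]; first by right.
exfalso; have [u Uu Hu] := key a na; have [v Uv Hv] := key b nb.
apply: nUbot; apply: Uup (Umeet _ _ (Umeet _ _ Uu Uv) Uab) _.
rewrite meetC meetUl leUx; apply/andP; split.
- apply: le_trans Hu; rewrite lexI leIl andbT; apply: le_trans (leIr _ _) _; exact: leIl.
- apply: le_trans Hv; rewrite lexI leIl andbT; apply: le_trans (leIr _ _) _; exact: leIr.
Qed.

Lemma image_prime (f : A -> A) (P : A -> Prop) :
  injective f -> (forall y, exists x, y = f x) ->
  (forall x y, f (x `&` y) = f x `&` f y) ->
  (forall x y, f (x `|` y) = f x `|` f y) -> f \bot = \bot ->
  primef P -> primef (image_set f P).
Proof.
move=> finj fsur fI fU f0 [[[x0 Px0] Pup Pmeet] nPb Ppr].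
have fle : forall x y, f x <= f y -> x <= y.
  move=> x y; rewrite !leEmeet -fI => /eqP H; apply/eqP; exact: finj.
split.
- split.
  + by exists (f x0); exists x0.
  + move=> x y [u Pu ->]; have [v ->] := fsur y; move=> Hy; exists v => //.
    by apply: Pup Pu (fle _ _ Hy).
  + by move=> x y [u Pu ->] [v Pv ->]; exists (u `&` v); [apply: Pmeet | rewrite fI].
- move=> [u Pu]; rewrite -f0 => /finj E; by apply: nPb; rewrite E.
- move=> a b; have [a' ->] := fsur a; have [b' ->] := fsur b.
  rewrite -fU => -[u Pu /finj E]; case: (Ppr a' b'); first by rewrite E.
  + by move=> H; left; exists a'.
  + by move=> H; right; exists b'.
Qed.

Section N.
Variable neg : A -> A.
Hypothesis negK : forall x, neg (neg x) = x.
Hypothesis negU : forall x y, neg (x `|` y) = neg x `&` neg y.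

Lemma negI x y : neg (x `&` y) = neg x `|` neg y.
Proof. by rewrite -[in LHS](negK x) -[in LHS](negK y) -negU negK. Qed.

Lemma neg_anti x y : x <= y -> neg y <= neg x.
Proof. by move=> /join_r <-; rewrite negU leIl. Qed.

Lemma neg_top : neg \top = \bot.
Proof.
apply/eqP; rewrite eq_le le0x andbT -(negK \bot); apply: neg_anti; exact: lex1.
Qed.

Lemma br_filter (P : A -> Prop) : primef P -> lattice_filter (br_transform neg P).
Proof.
move=> [[_ Pup _] nPb Ppr]; split.
- exists \top => -[x Px E]; apply: nPb; apply: Pup Px _.
  by rewrite -(negK x) -E neg_top.
- move=> x y Hx Hxy [z Pz E]; apply: Hx; exists (neg x); last by rewrite negK.
  apply: Pup Pz _; rewrite -(negK z) -E; exact: neg_anti.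
- move=> x y Hx Hy [z Pz E].
  have : P (neg x `|` neg y) by rewrite -negI E negK.
  case/Ppr => H; [apply: Hx | apply: Hy]; eexists; eauto; by rewrite negK.
Qed.
End N.

Lemma filter_top (F : A -> Prop) : lattice_filter F -> F \top.
Proof. by move=> [[x Fx] Fup _]; apply: Fup Fx (lex1 _). Qed.

End S.

Theorem proposition2p4 (disp : Order.disp_t) (A : tbDistrLatticeType disp)
  (neg pc t : A -> A) (k : nat) (U : A -> Prop) :
  (1 <= k)%N ->
  Ck_algebra k neg pc t ->
  ultrafilter U ->
  c_filter neg pc t (N_set k neg t U).
Proof.
move=> k1 [[[negK negU] _ ax] [[g tg gt] [tI [tU [t0 [_ [tneg _]]]]]] tk] Uu.
have tinj : injective t by apply: can_inj tg.
have itinj : forall i, injective (iter i t).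
  by elim=> [|i IH] x y //= /tinj /IH.
have itsur : forall i y, exists x, y = iter i t x.
  elim=> [|i IH] y; first by exists y.
  have [x Hx] := IH (g y); exists x; by rewrite iterS -Hx gt.
have itI : forall i x y, iter i t (x `&` y) = iter i t x `&` iter i t y.
  by elim=> [|i IH] x y //=; rewrite IH tI.
have itU : forall i x y, iter i t (x `|` y) = iter i t x `|` iter i t y.
  by elim=> [|i IH] x y //=; rewrite IH tU.
have it0 : forall i, iter i t \bot = \bot.
  by elim=> [|i IH] //=; rewrite IH t0.
pose P i := image_set (iter i t) U.
have Pp : forall i, primef (P i).
  move=> i; apply: image_prime => //; exact: ultra_prime.
have Bf : forall i, lattice_filter (br_transform neg (P i)).
  by move=> i; apply: br_filter => //.
split.
- split.
  + exists \top => i _; split; first by apply: filter_top; case: (Pp i).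
    by apply: filter_top; apply: Bf.
  + move=> x y Hx Hxy i ik; have [H1 H2] := Hx i ik; split.
      by case: (Pp i) => -[_ up _] _ _; apply: up H1 Hxy.
    by case: (Bf i) => _ up _; apply: up H2 Hxy.
  + move=> x y Hx Hy i ik; have [H1 H2] := Hx i ik; have [H3 H4] := Hy i ik; split.
      by case: (Pp i) => -[_ _ me] _ _; apply: me.
    by case: (Bf i) => _ _ me; apply: me.
- move=> x Hx i ik; have [Px Bx] := Hx i ik.
  case: (Pp i) => -[_ Pup Pme] _ Ppr.
  have nx : ~ P i (neg x) by move=> H; apply: Bx; exists (neg x); rewrite ?negK.
  have ax' : neg x `|` x <= neg x `|` pc (neg x) by have := ax (neg x); rewrite negK.
  have ppc : P i (pc (neg x)).
    have : P i (neg x `|` pc (neg x)) by apply: Pup Px _; apply: le_trans ax'; exact: leUr.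
    by case/Ppr.
  have ineq : x `&` neg (pc (neg x)) <= neg x.
    have := @neg_anti _ _ _ negU _ _ ax'; rewrite !negU negK => H; apply: le_trans H _; exact: leIr.
  have dE : delta neg pc x = x `&` pc (neg x) by rewrite /delta /nabla !negK.
  rewrite dE; split; first by apply: Pme.
  move=> [z Pz E].
  have : P i (neg x `|` neg (pc (neg x))) by rewrite -(@negI _ _ _ negK negU) E negK.
  case/Ppr => // H; apply: nx; apply: Pup (Pme _ _ Px H) ineq.
- move=> x Hx i ik.
  have [j jk ij] : exists2 j, (j < k)%N & forall u, iter i t u = t (iter j t u).
    case: i ik => [|i'] ik.
      exists k.-1; first by rewrite prednK.
      by move=> u; rewrite -{1}(tk u) -(prednK k1) iterS.
    by exists i' => //; apply: ltnW.
  have [[u Uu0 Eu] Bj] := Hx j jk; split.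
    by exists u => //; rewrite ij Eu.
  move=> [z [w Uw Ez] E]; apply: Bj; exists (iter j t w); first by exists w.
  apply: tinj; rewrite tneg -ij -Ez -E Eu; done.
Qed.
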